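(* Consider the BC-phase training model described in the context, with relay training length $L_R$ and total MSE $e_1(\mathbf S_R)+e_2(\mathbf S_R)$. (i) If $L_R\ge M$, then for every $\varepsilon>0$ there exists $\mathbf S_R\in\mathbb C^{M\times L_R}$ (with no bound on $\mathrm{Tr}(\mathbf S_R\mathbf S_R^H)$) such that $e_1(\mathbf S_R)+e_2(\mathbf S_R)<\varepsilon$; i.e. an arbitrarily small MSE can be achieved with sufficiently large relay power when $L_R=M$. (ii) If $L_R<M$, then for every $\mathbf S_R\in\mathbb C^{M\times L_R}$ (even with infinite relay power) $$e_1(\mathbf S_R)+e_2(\mathbf S_R)\ge\sum_{m=L_R+1}^{M}\sigma_{t,G,m}\Big(\sum_{n=1}^{N_1}\sigma_{r,G_1,n}+\sum_{n=1}^{N_2}\sigma_{r,G_2,n}\Big),$$ where $\sigma_{t,G,1}\ge\dots\ge\sigma_{t,G,M}$ are the eigenvalues of $\mathbf Z_{t,G}$ in decreasing order and $\sigma_{r,G_i,n}$ are the eigenvalues of $\mathbf Z_{r,G_i}$. (iii) Suppose $\mathbf K_{q,i}=q_i\mathbf I_{L_R}$ with $q_i>0$ for $i=1,2$, let $\tau_R>0$, and let $\mathbf S_R^{\rm opt}$ be an optimal solution of $\min_{\mathbf S_R} e_1(\mathbf S_R)+e_2(\mathbf S_R)$ subject to $\mathrm{Tr}(\mathbf S_R\mathbf S_R^H)\le\tau_R$, with $\mathrm{Rank}(\mathbf S_R^{\rm opt})=r$. Then there exists $\tilde{\mathbf S}_R\in\mathbb C^{M\times r}$ with $\mathrm{Tr}(\tilde{\mathbf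 S}_R\tilde{\mathbf S}_R^H)=\mathrm{Tr}(\mathbf S_R^{\rm opt}\mathbf S_R^{{\rm opt}H})$ whose total MSE in the same model with training length $r$ (temporal disturbance covariances $q_i\mathbf I_r$) equals that of $\mathbf S_R^{\rm opt}$; i.e. the training length can be reduced to $L_R=r$.
   Context: BC phase of a MIMO two-way relay system: relay with $M$ antennas broadcasts training $\mathbf S_R\in\mathbb C^{M\times L_R}$ to sources with $N_1,N_2$ antennas. Let $\mathbf Z_{t,G}\in\mathbb C^{M\times M}$ and $\mathbf Z_{r,G_i}\in\mathbb C^{N_i\times N_i}$ be Hermitian positive definite with $\mathbf Z_{t,G}=\mathbf C_{t,G}\mathbf C_{t,G}^H$, $\mathbf Z_{r,G_i}=\mathbf C_{r,G_i}\mathbf C_{r,G_i}^H$ (square invertible factors). Channels $\mathbf G_i=\mathbf C_{r,G_i}\mathbf W_{G_i}\mathbf C_{t,G}^T\in\mathbb C^{N_i\times M}$ with $\mathbf W_{G_i}$ having i.i.d. $\mathcal{CN}(0,1)$ entries. Source $i$ receives $\mathbf Y_i=\mathbf G_i\mathbf S_R+\mathbf N_i$, $\mathrm{vec}(\mathbf N_i)\sim\mathcal{CN}(\mathbf 0,\mathbf K_i)$, $\mathbf K_i=\mathbf K_{q,i}\otimes\mathbf K_{r,i}$ with $\mathbf K_{q,i}\in\mathbb C^{L_R\times L_R}$, $\mathbf K_{r,i}\in\mathbb C^{N_i\times N_i}$ Hermitian positive definite, $\mathbf K_{r,i}$ sharing eigenvectors with $\mathbf Z_{r,G_i}$. The LMMSE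 estimation error of $\mathrm{vec}(\mathbf G_i)$ is $e_i(\mathbf S_R)=\mathrm{Tr}\big[\mathbf C_{0,G_i}(\mathbf I+\mathbf F_i^H\mathbf K_i^{-1}\mathbf F_i)^{-1}\big]$, $\mathbf F_i=\mathbf S_R^T\mathbf C_{t,G}\otimes\mathbf C_{r,G_i}$, $\mathbf C_{0,G_i}=\mathbf C_{t,G}^H\mathbf C_{t,G}\otimes\mathbf C_{r,G_i}^H\mathbf C_{r,G_i}$. *)

(* Defs.v *)
From HB Require Import structures.
From mathcomp Require Import all_boot all_order all_algebra.
From mathcomp Require Import complex mxtens.
Set Implicit Arguments. Unset Strict Implicit. Unset Printing Implicit Defensive.
Import Order.TTheory GRing.Theory Num.Theory.
Local Open Scope ring_scope.

Definition hadj (C : numClosedFieldType) m n (A : 'M[C]_(m, n)) : 'M[C]_(n, m) :=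
  (map_mx Num.conj A)^T.

Definition herm_pd (C : numClosedFieldType) n (A : 'M[C]_n) : Prop :=
  hadj A = A /\ forall x : 'cV[C]_n, x != 0 -> 0 < (hadj x *m A *m x) 0 0.

Definition share_eigvecs (C : numClosedFieldType) n (K Z : 'M[C]_n) : Prop :=
  exists U : 'M[C]_n, hadj U *m U = 1%:M /\
    is_diag_mx (hadj U *m K *m U) /\ is_diag_mx (hadj U *m Z *m U).

Definition eigvals_of (C : numClosedFieldType) n (Z : 'M[C]_n) (s : 'I_n -> C) : Prop :=
  char_poly Z = \prod_(i < n) ('X - (s i)%:P).

Definition mse (C : numClosedFieldType) (M N L : nat)
    (Ct : 'M[C]_M) (Cr : 'M[C]_N) (Kq : 'M[C]_L) (Kr : 'M[C]_N)
    (S : 'M[C]_(M, L)) : C :=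
  let F : 'M[C]_(L * N, M * N) := tensmx (S^T *m Ct) Cr in
  let K : 'M[C]_(L * N) := tensmx Kq Kr in
  let C0 : 'M[C]_(M * N) := tensmx (hadj Ct *m Ct) (hadj Cr *m Cr) in
  \tr (C0 *m invmx (1%:M + hadj F *m invmx K *m F)).

Definition total_mse (C : numClosedFieldType) (M N1 N2 L : nat)
    (Ct : 'M[C]_M) (Cr1 : 'M[C]_N1) (Cr2 : 'M[C]_N2)
    (Kq1 Kq2 : 'M[C]_L) (Kr1 : 'M[C]_N1) (Kr2 : 'M[C]_N2)
    (S : 'M[C]_(M, L)) : C :=
  mse Ct Cr1 Kq1 Kr1 S + mse Ct Cr2 Kq2 Kr2 S.

(* Main.v *)
Require Import Defs.
From HB Require Import structures.
From mathcomp Require Import all_boot all_order all_algebra.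
From mathcomp Require Import complex mxtens.
From mathcomp Require Import sesquilinear spectral perm.
From mathcomp Require Import ring.
Set Implicit Arguments. Unset Strict Implicit. Unset Printing Implicit Defensive.
Import Order.TTheory GRing.Theory Num.Theory.
Local Open Scope ring_scope.

Section Basics.
Variable C : numClosedFieldType.

Lemma hadjK m n (A : 'M[C]_(m, n)) : hadj (hadj A) = A.
Proof. by rewrite /hadj -map_trmx trmxK -map_mx_comp (map_mx_id (@conjCK _)). Qed.

Lemma hadjM m n p (A : 'M[C]_(m, n)) (B : 'M_(n, p)) :
  hadj (A *m B) = hadj B *m hadj A.
Proof. by rewrite /hadj map_mxM trmx_mul. Qed.

Lemma hadjD m n (A B : 'M[C]_(m, n)) : hadj (A + B) = hadj A + hadj B.
Proof. by rewrite /hadj map_mxD linearD. Qed.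

Lemma hadjN m n (A : 'M[C]_(m, n)) : hadj (- A) = - hadj A.
Proof. by rewrite /hadj map_mxN linearN. Qed.

Lemma hadjB m n (A B : 'M[C]_(m, n)) : hadj (A - B) = hadj A - hadj B.
Proof. by rewrite hadjD hadjN. Qed.

Lemma hadjZ m n c (A : 'M[C]_(m, n)) : hadj (c *: A) = c^* *: hadj A.
Proof. by rewrite /hadj map_mxZ linearZ. Qed.

Lemma hadj0 m n : hadj (0 : 'M[C]_(m, n)) = 0.
Proof. by rewrite /hadj map_mx0 trmx0. Qed.

Lemma hadj1 n : hadj (1%:M : 'M[C]_n) = 1%:M.
Proof. by rewrite /hadj map_mx1 trmx1. Qed.

Lemma hadj_scalar n c : hadj (c%:M : 'M[C]_n) = c^*%:M.
Proof. by rewrite /hadj map_scalar_mx tr_scalar_mx. Qed.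

Lemma hadjE m n (A : 'M[C]_(m, n)) i j : hadj A i j = (A j i)^*.
Proof. by rewrite !mxE. Qed.

Lemma hadj_inv n (A : 'M[C]_n) : hadj (invmx A) = invmx (hadj A).
Proof. by rewrite /hadj map_invmx trmx_inv. Qed.

Lemma hadj_unit n (A : 'M[C]_n) : (hadj A \in unitmx) = (A \in unitmx).
Proof. by rewrite /hadj unitmx_tr map_unitmx. Qed.

Lemma hadj_tens m n p q (A : 'M[C]_(m, n)) (B : 'M[C]_(p, q)) :
  hadj (A *t B) = hadj A *t hadj B.
Proof. by rewrite /hadj map_mxT trmx_tens. Qed.

Lemma hadj_tr m n (A : 'M[C]_(m, n)) : hadj (A^T) = (hadj A)^T.
Proof. by rewrite /hadj -map_trmx. Qed.

Lemma mxtrace_hadj n (A : 'M[C]_n) : \tr (hadj A) = (\tr A)^*.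
Proof. rewrite /hadj mxtrace_tr /mxtrace rmorph_sum /=. by apply: eq_bigr => i _; rewrite mxE. Qed.


Definition qf n (A : 'M[C]_n) (x : 'cV[C]_n) : C := (hadj x *m A *m x) 0 0.
Definition psd n (A : 'M[C]_n) := forall x, 0 <= qf A x.
Definition pd n (A : 'M[C]_n) := forall x, x != 0 -> 0 < qf A x.

Lemma qfD n (A B : 'M[C]_n) x : qf (A + B) x = qf A x + qf B x.
Proof. by rewrite /qf mulmxDr mulmxDl mxE. Qed.

Lemma qfB n (A B : 'M[C]_n) x : qf (A - B) x = qf A x - qf B x.
Proof. by rewrite /qf mulmxBr mulmxBl !mxE. Qed.

Lemma qfZ n (A : 'M[C]_n) c x : qf (c *: A) x = c * qf A x.
Proof. by rewrite /qf -scalemxAr -scalemxAl mxE. Qed.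

Lemma qf_sand n p (A : 'M[C]_n) (B : 'M[C]_(n, p)) x :
  qf (hadj B *m A *m B) x = qf A (B *m x).
Proof. by rewrite /qf hadjM !mulmxA. Qed.

Lemma qf1E n (x : 'cV[C]_n) : qf 1%:M x = \sum_i x i 0 * (x i 0)^*.
Proof.
rewrite /qf mulmx1 mxE; apply: eq_bigr => i _; by rewrite hadjE mulrC.
Qed.

Lemma qf1_ge0 n (x : 'cV[C]_n) : 0 <= qf 1%:M x.
Proof. by rewrite qf1E sumr_ge0 // => i _; rewrite mul_conjC_ge0. Qed.

Lemma qf1_gt0 n (x : 'cV[C]_n) : x != 0 -> 0 < qf 1%:M x.
Proof.
move=> xn0; rewrite qf1E.
suff /existsP[i xi] : [exists i, x i 0 != 0].
  rewrite (bigD1 i) //= ltr_wpDr// ?sumr_ge0// ?mul_conjC_gt0//.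
  by move=> j _; rewrite mul_conjC_ge0.
apply: contraNT xn0; rewrite negb_exists => /forallP xN.
apply/eqP/matrixP => i j; rewrite ord1 mxE; apply/eqP.
by have := xN i; rewrite negbK.
Qed.

Lemma psd1 n : psd (1%:M : 'M[C]_n).
Proof. move=> x; exact: qf1_ge0. Qed.

Lemma psdD n (A B : 'M[C]_n) : psd A -> psd B -> psd (A + B).
Proof. by move=> hA hB x; rewrite qfD addr_ge0. Qed.

Lemma psd_sand n p (A : 'M[C]_n) (B : 'M[C]_(n, p)) :
  psd A -> psd (hadj B *m A *m B).
Proof. by move=> hA x; rewrite qf_sand. Qed.

Lemma psd_gram n p (B : 'M[C]_(n, p)) : psd (hadj B *m B).
Proof. by move=> x; rewrite -[hadj B]mulmx1 qf_sand qf1_ge0. Qed.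

Lemma qf_diag n p (A : 'M[C]_n) (Y : 'M[C]_(n, p)) i :
  (hadj Y *m A *m Y) i i = qf A (col i Y).
Proof.
rewrite /qf !mxE; apply: eq_bigr => k _; rewrite !mxE; congr (_ * _).
by apply: eq_bigr => l _; rewrite !mxE.
Qed.

Lemma tr_psd m n (D : 'M[C]_(m, n)) (X : 'M[C]_n) :
  psd X -> 0 <= \tr (hadj D *m D *m X).
Proof.
move=> hX; rewrite -mulmxA mxtrace_mulC -{1}[D]hadjK.
by rewrite /mxtrace sumr_ge0 // => i _; rewrite qf_diag.
Qed.

Lemma pd_unit n (A : 'M[C]_n) : pd A -> A \in unitmx.
Proof.
move=> hA; rewrite -unitmx_tr -row_free_unit -kermx_eq0.
apply: contraT => /rowV0Pn [u uK un0].
have hu : A *m u^T = 0.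
  by apply: trmx_inj; rewrite trmx_mul trmxK trmx0; apply/sub_kermxP.
have := hA (u^T); rewrite /qf -mulmxA hu mulmx0 mxE ltxx.
by rewrite trmx_eq0 un0 => /(_ isT).
Qed.

Lemma inv_herm n (A : 'M[C]_n) : hadj A = A -> hadj (invmx A) = invmx A.
Proof. by move=> hA; rewrite hadj_inv hA. Qed.

Lemma inv_psd n (A : 'M[C]_n) :
  A \in unitmx -> hadj A = A -> psd A -> psd (invmx A).
Proof.
move=> uA hA pA x.
have -> : qf (invmx A) x = qf A (invmx A *m x).
  by rewrite /qf hadjM inv_herm // !mulmxA mulmxKV.
exact: pA.
Qed.


Lemma tens11 m n : (1%:M : 'M[C]_m) *t (1%:M : 'M[C]_n) = 1%:M.
Proof.
apply/matrixP => i j.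
case: (mxtens_indexP i) => i1 i2; case: (mxtens_indexP j) => j1 j2.
rewrite tensmxE !mxE (inj_eq (can_inj (@mxtens_indexK m n))) xpair_eqE.
by rewrite -natrM mulnb.
Qed.

Lemma tr_tens m n (A : 'M[C]_m) (B : 'M[C]_n) : \tr (A *t B) = \tr A * \tr B.
Proof.
rewrite /mxtrace mulr_sum; apply: eq_bigr => k _.
by rewrite !mxE.
Qed.

Lemma tensZl m n p q c (A : 'M[C]_(m, n)) (B : 'M[C]_(p, q)) :
  (c *: A) *t B = c *: (A *t B).
Proof. by apply/matrixP => i j; rewrite !mxE mulrA. Qed.

Lemma inv_left n (A X : 'M[C]_n) : X *m A = 1%:M -> invmx A = X.
Proof.
move=> h; have [uX uA] := mulmx1_unit h.
by rewrite -[invmx A]mul1mx -h mulmxK.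
Qed.

Lemma tens_inv m n (A : 'M[C]_m) (B : 'M[C]_n) :
  A \in unitmx -> B \in unitmx ->
  (A *t B \in unitmx) /\ invmx (A *t B) = invmx A *t invmx B.
Proof.
move=> uA uB.
have h : (invmx A *t invmx B) *m (A *t B) = 1%:M.
  by rewrite tensmx_mul !mulVmx // tens11.
by split; [case: (mulmx1_unit h) | exact: inv_left].
Qed.


Lemma hadjEt m n (A : 'M[C]_(m, n)) : hadj A = map_mx Num.conj (A^T).
Proof. by rewrite /hadj map_trmx. Qed.

Lemma unitary_hadj m n (U : 'M[C]_(m, n)) : U \is unitarymx -> U *m hadj U = 1%:M.
Proof. by move=> /unitarymxP; rewrite hadjEt. Qed.

Lemma herm_normal n (P : 'M[C]_n) : hadj P = P -> P \is normalmx.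
Proof. by move=> hP; apply/normalmxP; rewrite -hadjEt hP. Qed.

Lemma spectral_herm n (P : 'M[C]_n) : hadj P = P ->
  let U := spectralmx P in let d := spectral_diag P in
  [/\ U *m hadj U = 1%:M, hadj U *m U = 1%:M &
      P = hadj U *m diag_mx d *m U].
Proof.
move=> hP U d.
have uU : U *m hadj U = 1%:M by apply: unitary_hadj; apply: spectral_unitarymx.
split => //; first by apply: mulmx1C.
have := herm_normal hP => /orthomx_spectralP ->.
by rewrite invmx_unitary ?spectral_unitarymx // -hadjEt.
Qed.

Lemma spectral_diag_qf n (P : 'M[C]_n) (U : 'M[C]_n) (d : 'rV[C]_n) i :
  U *m hadj U = 1%:M -> P = hadj U *m diag_mx d *m U ->
  d 0 i = qf P (col i (hadj U)) /\ col i (hadj U) != 0.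
Proof.
move=> uU hP; split.
  rewrite -qf_diag hadjK hP !mulmxA uU mul1mx -mulmxA uU mulmx1.
  by rewrite mxE eqxx mulr1n.
apply/eqP => h0.
have := qf_diag 1%:M (hadj U) i; rewrite h0 hadjK mulmx1 uU /qf mulmx0 !mxE eqxx /=.
by move/eqP; rewrite oner_eq0.
Qed.

Lemma herm_pd_factor n (P : 'M[C]_n) : herm_pd P ->
  exists B : 'M[C]_n, B \in unitmx /\ P = hadj B *m B.
Proof.
case=> hP pP; have [uU Uu eP] := spectral_herm hP.
set U := spectralmx P in uU Uu eP; set d := spectral_diag P in eP.
have dpos : forall i, 0 < d 0 i.
  move=> i; have [-> nz] := spectral_diag_qf i uU eP; exact: pP.
pose s : 'rV[C]_n := \row_i sqrtC (d 0 i).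
have spos : forall i, 0 < s 0 i by move=> i; rewrite mxE sqrtC_gt0.
exists (diag_mx s *m U); split.
  rewrite unitmx_mul unitmxE det_diag unitfE prodf_seq_neq0.
  rewrite (mulmx1_unit uU).1 andbT.
  by apply/allP => i _; rewrite gt_eqF.
have hs : hadj (diag_mx s) = diag_mx s.
  rewrite /hadj map_diag_mx tr_diag_mx; congr diag_mx.
  apply/matrixP => i j; rewrite ord1 !mxE.
  by apply: geC0_conj; rewrite sqrtC_ge0 ltW.
rewrite {1}eP hadjM hs -!mulmxA; congr (_ *m _); rewrite !mulmxA; congr (_ *m _).
rewrite mul_diag_mx; apply/matrixP => i j; rewrite !mxE.
by rewrite mulrnAr -expr2 sqrtCK.
Qed.


Lemma invmxM n (A B : 'M[C]_n) : A \in unitmx -> B \in unitmx ->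
  invmx (A *m B) = invmx B *m invmx A.
Proof.
move=> uA uB; apply: inv_left.
by rewrite mulmxA -[invmx B *m _ *m A]mulmxA mulVmx // mulmx1 mulVmx.
Qed.

Lemma herm_pd_tens_inv m n (Kq : 'M[C]_m) (Kr : 'M[C]_n) :
  herm_pd Kq -> herm_pd Kr ->
  exists W : 'M[C]_(m * n), W \in unitmx /\ invmx (Kq *t Kr) = hadj W *m W.
Proof.
move=> /herm_pd_factor [Bq [uBq ->]] /herm_pd_factor [Br [uBr ->]].
have [uB _] := tens_inv uBq uBr.
set B := Bq *t Br in uB.
have -> : (hadj Bq *m Bq) *t (hadj Br *m Br) = hadj B *m B by rewrite hadj_tens tensmx_mul.
exists (hadj (invmx B)); split; first by rewrite hadj_unit unitmx_inv.
by rewrite hadjK invmxM ?hadj_unit // hadj_inv.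
Qed.

Lemma keyA p n (Y : 'M[C]_(p, n)) (A := 1%:M + hadj Y *m Y) :
  [/\ A \in unitmx, hadj A = A, psd A, psd (invmx A) & hadj (invmx A) = invmx A].
Proof.
have hA : hadj A = A by rewrite /A hadjD hadj1 hadjM hadjK.
have pA : psd A by apply: psdD; [apply: psd1 | apply: psd_gram].
have uA : A \in unitmx.
  apply: pd_unit => x xn0; rewrite /A qfD; apply: (lt_le_trans (qf1_gt0 xn0)).
  by rewrite lerDl; apply: psd_gram.
by split => //; [apply: inv_psd | apply: inv_herm].
Qed.

Lemma mse_lower q p n (Y : 'M[C]_(p, n)) (D : 'M[C]_(q, n)) (Q : 'M[C]_n) :
  hadj Q = Q -> Q *m Q = Q -> Y *m Q = 0 ->
  \tr (hadj D *m D *m Q) <= \tr (hadj D *m D *m invmx (1%:M + hadj Y *m Y)).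
Proof.
move=> hQ QQ YQ; have [uA hA pA piA hiA] := keyA Y.
set A := 1%:M + hadj Y *m Y in uA hA pA piA hiA *.
have AQ : A *m Q = Q by rewrite /A mulmxDl mul1mx -mulmxA YQ mulmx0 addr0.
have AiQ : invmx A *m Q = Q by rewrite -{1}AQ mulKmx.
have QAi : Q *m invmx A = Q.
  by rewrite -{1}hQ -hiA -hadjM AiQ hQ.
have e : invmx A - Q = hadj (1%:M - Q) *m invmx A *m (1%:M - Q).
  rewrite hadjB hadj1 hQ mulmxBl mul1mx QAi mulmxBr mulmx1 mulmxBl AiQ QQ.
  by rewrite subrr subr0.
rewrite -subr_ge0 -raddfB /= -mulmxBr e.
by apply: tr_psd; apply: psd_sand.
Qed.

Lemma mse_upper q n (G : 'M[C]_n) (D : 'M[C]_(q, n)) (c : C) :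
  G \in unitmx -> hadj G = G -> psd (invmx G) -> 0 < c ->
  \tr (hadj D *m D *m invmx (1%:M + c *: G)) <= c^-1 * \tr (hadj D *m D *m invmx G).
Proof.
move=> uG hG piG c0.
have pG : psd G.
  have uiG : invmx G \in unitmx by rewrite unitmx_inv.
  have := inv_psd uiG (inv_herm hG) piG; by rewrite invmxK.
set N := c *: G.
have uN : N \in unitmx by rewrite /N unitmxZ ?unitfE ?gt_eqF.
have hN : hadj N = N by rewrite /N hadjZ hG geC0_conj // ltW.
set A := 1%:M + N.
have uA : A \in unitmx.
  apply: pd_unit => x xn0; rewrite /A qfD; apply: (lt_le_trans (qf1_gt0 xn0)).
  by rewrite lerDl /N qfZ mulr_ge0 // ltW.
have hA : hadj A = A by rewrite /A hadjD hadj1 hN.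
have piN : psd (invmx N) by rewrite /N invmxZ // => x; rewrite qfZ mulr_ge0 // invr_ge0 ltW.
have hiA : hadj (invmx A) = invmx A by apply: inv_herm.
have comm : invmx N *m invmx A = invmx A *m invmx N.
  rewrite -!invmxM //; congr invmx.
  by rewrite /A mulmxDl mulmxDr mul1mx mulmx1.
have e : invmx N - invmx A = hadj (invmx A) *m (invmx N + 1%:M) *m invmx A.
  have -> : invmx N + 1%:M = invmx N *m A.
    by rewrite /A mulmxDr mulmx1 mulVmx.
  rewrite hiA -!mulmxA mulmxV // mulmx1 -comm.
  rewrite -{1}[invmx N]mulmx1 -(mulmxV uA) -{2}[invmx A]mul1mx -(mulVmx uN).
  by rewrite !mulmxA -mulmxBl -mulmxBr /A addrK mulmx1.
have : 0 <= \tr (hadj D *m D *m (invmx N - invmx A)).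
  by rewrite e; apply: tr_psd; apply: psd_sand; apply: psdD => //; apply: psd1.
rewrite mulmxBr raddfB /= subr_ge0 /N invmxZ // -scalemxAr mxtraceZ.
done.
Qed.


Lemma char_poly_sim n (Q A P : 'M[C]_n) :
  Q *m P = 1%:M -> char_poly (Q *m A *m P) = char_poly A.
Proof.
move=> QP; rewrite /char_poly /char_poly_mx.
set Qp := map_mx polyC Q; set Pp := map_mx polyC P.
have QPp : Qp *m Pp = 1%:M by rewrite -map_mxM QP map_mx1.
have -> : ('X%:M - map_mx polyC (Q *m A *m P) : 'M_n) =
          Qp *m ('X%:M - map_mx polyC A) *m Pp.
  rewrite mulmxBr mulmxBl !map_mxM; congr (_ - _).
  by rewrite mul_mx_scalar -scalemxAl QPp scalemx1.
rewrite !det_mulmx mulrC mulrA -det_mulmx mulmxE.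
by rewrite -mulmxE [Pp *m Qp]mulmx1C // det1 mul1r.
Qed.

Lemma prod_seq_ord n (s : 'I_n -> C) :
  \prod_(i < n) ('X - (s i)%:P) = \prod_(x <- [seq s i | i <- enum 'I_n]) ('X - x%:P).
Proof. by rewrite big_map big_enum. Qed.

Lemma trace_eig n (Z : 'M[C]_n) s : eigvals_of Z s -> \tr Z = \sum_i s i.
Proof.
rewrite /eigvals_of; case: n Z s => [|n] Z s h.
  by rewrite /mxtrace !big_ord0.
have key := @coefPn_prod_XsubC _ [seq s i | i <- enum 'I_n.+1].
rewrite size_map size_enum_ord /= in key.
have := char_poly_trace Z; rewrite h prod_seq_ord key // => /(_ isT) /eqP.
by rewrite eqr_opp => /eqP <-; rewrite big_map big_enum.
Qed.

Lemma perm_charpoly n (d s : 'I_n -> C) :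
  \prod_(i < n) ('X - (d i)%:P) = \prod_(i < n) ('X - (s i)%:P) ->
  exists sg : 'S_n, forall i, d i = s (sg i).
Proof.
rewrite !prod_seq_ord => /prod_XsubC_eq.
set t := [tuple s i | i < n].
have -> : [seq s i | i <- enum 'I_n] = t by [].
move=> /tuple_permP [sg hsg]; exists sg => i.
have hu : [tuple d i | i < n] = [tuple tnth t (sg i) | i < n] by apply: val_inj.
have := congr1 (fun r => tnth r i) hu; rewrite /= !tnth_map !tnth_ord_tuple => ->.
by [].
Qed.


Lemma count_ge M L : \sum_(m < M) (((L <= m)%N)%:R : C) = (M - L)%:R.
Proof.
transitivity (\sum_(m < M | (L <= m)%N) (1 : C)).
  by rewrite [RHS]big_mkcond; apply: eq_bigr => m _; case: ifP.
have := @big_geq_mkord C 0 +%R L M xpredT (fun _ => 1).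
rewrite /= => <-; by rewrite sumr_const_nat.
Qed.

Lemma threshold M L k (st p : 'I_M -> C) (hLM : (L < M)%N) :
  (M - L <= k)%N -> (forall i j : 'I_M, (i <= j)%N -> st j <= st i) ->
  0 <= st (Ordinal hLM) -> (forall i, 0 <= p i) -> (forall i, p i <= 1) ->
  \sum_i p i = k%:R ->
  \sum_(m < M | (L <= m)%N) st m <= \sum_m st m * p m.
Proof.
move=> hk hst hc p0 p1 hp.
set c := st (Ordinal hLM) in hc *.
pose b (m : 'I_M) : C := ((L <= m)%N)%:R.
have e1 : \sum_(m < M | (L <= m)%N) st m = \sum_m st m * b m.
  rewrite big_mkcond /=; apply: eq_bigr => m _; rewrite /b.
  by case: ifP => _; rewrite ?mulr1 ?mulr0.
rewrite e1 -subr_ge0.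
have e2 : \sum_m st m * p m - \sum_m st m * b m =
          \sum_m ((st m - c) * (p m - b m)) + c * (\sum_m p m - \sum_m b m).
  rewrite -!sumrB mulr_sumr -big_split /=; apply: eq_bigr => m _; ring.
rewrite e2 hp count_ge addr_ge0 //; last first.
  by rewrite mulr_ge0 // subr_ge0 ler_nat.
apply: sumr_ge0 => m _; rewrite /b; case: leqP => hm.
  apply: mulr_le0; rewrite subr_le0 //; exact: hst.
rewrite subr0; apply: mulr_ge0 => //; rewrite subr_ge0; apply: hst => /=.
exact: ltnW.
Qed.


Lemma kyfan M L k (H : 'M[C]_M) (V : 'M[C]_(M, k)) (st : 'I_M -> C) :
  hadj H = H -> psd H -> eigvals_of H st ->
  (forall i j : 'I_M, (i <= j)%N -> st j <= st i) ->
  hadj V *m V = 1%:M -> (L < M)%N -> (M - L <= k)%N ->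
  \sum_(m < M | (L <= m)%N) st m <= \tr (H *m (V *m hadj V)).
Proof.
move=> hH pH hev hst VV hLM hk.
have [uU Uu eH] := spectral_herm hH.
set U := spectralmx H in uU Uu eH; set d := spectral_diag H in eH.
have dge0 : forall i, 0 <= d 0 i.
  by move=> i; have [-> _] := spectral_diag_qf i uU eH; apply: pH.
have cpH : char_poly H = \prod_(i < M) ('X - (d 0 i)%:P).
  rewrite eH char_poly_sim // char_poly_trig ?diag_mx_is_trig //.
  by apply: eq_bigr => i _; rewrite mxE eqxx mulr1n.
have [sg hsg] := @perm_charpoly M (fun i => d 0 i) st ltac:(by rewrite -cpH -hev).
set W := U *m V.
have WW : hadj W *m W = 1%:M.
  by rewrite /W hadjM mulmxA -[hadj V *m _ *m U]mulmxA Uu mulmx1.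
set X := W *m hadj W.
have hX : hadj X = X by rewrite /X hadjM hadjK.
have XX : X *m X = X by rewrite /X mulmxA -[W *m _ *m W]mulmxA WW mulmx1.
have etr : \tr (H *m (V *m hadj V)) = \sum_i d 0 i * X i i.
  rewrite eH /X /W hadjM -!mulmxA mxtrace_mulC !mulmxA.
  rewrite /mxtrace; apply: eq_bigr => i _.
  by rewrite -!mulmxA mul_diag_mx mxE !mulmxA.
pose p i := X i i.
have p0 : forall i, 0 <= p i.
  move=> i; rewrite /p /X -[W in W *m _]hadjK -[hadj (hadj W)]mulmx1 qf_diag.
  exact: qf1_ge0.
have p1 : forall i, p i <= 1.
  move=> i.
  have hpp : p i * p i <= p i.
    have e : X i i = \sum_l X i l * (X i l)^*.
      rewrite -{1}XX mxE; apply: eq_bigr => l _; congr (_ * _).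
      by rewrite -{1}hX hadjE.
    have := p0 i; rewrite /p => pi0.
    rewrite {3}e (bigD1 i) //= geC0_conj // lerDl.
    by apply: sumr_ge0 => l _; exact: mul_conjC_ge0.
  have [->|pn0] := eqVneq (p i) 0; first exact: ler01.
  have pp : 0 < p i by rewrite lt_def pn0 p0.
  by rewrite -(ler_pM2l pp) mulr1.
have psum : \sum_i p i = k%:R.
  by rewrite /p -/(mxtrace X) /X mxtrace_mulC WW mxtrace1.
rewrite etr.
have -> : \sum_i d 0 i * X i i = \sum_j st j * p ((sg^-1)%g j).
  rewrite [RHS](reindex_inj (@perm_inj _ sg)) /=; apply: eq_bigr => i _.
  by rewrite permK hsg.
apply: (@threshold M L k st (fun j => p ((sg^-1)%g j)) hLM) => //.
- by rewrite -{1}[Ordinal hLM](permKV sg) -hsg.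
- rewrite -psum (reindex_inj (@perm_inj _ sg)) /=; apply: eq_bigr => i _.
  by rewrite permK.
Qed.


Lemma reduce_rank m l (S : 'M[C]_(m, l)) :
  exists St : 'M[C]_(m, \rank S), St *m hadj St = S *m hadj S.
Proof.
pose Q := schmidt (row_base S).
have uQ : Q *m hadj Q = 1%:M.
  by apply: unitary_hadj; apply: schmidt_unitarymx; apply: rank_leq_col.
have sSQ : (S <= Q)%MS.
  by rewrite /Q (eqmx_schmidt_free (row_base_free S)) eq_row_base.
have [X eX] := submxP sSQ.
exists X; have -> : S *m hadj S = X *m Q *m hadj (X *m Q) by rewrite -eX.
by rewrite hadjM mulmxA -[X *m Q *m _]mulmxA uQ mulmx1.
Qed.

Lemma kernel_basis L M (T : 'M[C]_(L, M)) :
  exists k (V : 'M[C]_(M, k)),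
    [/\ hadj V *m V = 1%:M, T *m V = 0 & (M - L <= k)%N].
Proof.
pose K := kermx T^T.
pose E := schmidt (row_base K).
have uE : E *m hadj E = 1%:M.
  by apply: unitary_hadj; apply: schmidt_unitarymx; apply: rank_leq_col.
have sEK : (E <= K)%MS.
  by rewrite /E (eqmx_schmidt_free (row_base_free K)) eq_row_base.
have ET : E *m T^T = 0 by apply/sub_kermxP.
exists (\rank K), E^T; split.
- by rewrite hadj_tr -trmx_mul uE trmx1.
- by rewrite -[T]trmxK -trmx_mul ET trmx0.
- by rewrite mxrank_ker leq_sub2l // rank_leq_col.
Qed.


Lemma mseE M N L (Ct : 'M[C]_M) (Cr : 'M[C]_N) (Kq : 'M[C]_L) (Kr : 'M[C]_N)
  (S : 'M[C]_(M, L)) (W : 'M[C]_(L * N)) :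
  invmx (Kq *t Kr) = hadj W *m W ->
  mse Ct Cr Kq Kr S = \tr (hadj (Ct *t Cr) *m (Ct *t Cr) *m
     invmx (1%:M + hadj (W *m ((S^T *m Ct) *t Cr)) *m (W *m ((S^T *m Ct) *t Cr)))).
Proof.
move=> hW; rewrite /mse /= hW [in RHS]hadj_tens [in RHS]tensmx_mul.
by rewrite [hadj (W *m _)]hadjM !mulmxA.
Qed.

Lemma mse_ii M N L (Ct : 'M[C]_M) (Cr : 'M[C]_N) (Kq : 'M[C]_L) (Kr : 'M[C]_N)
  (S : 'M[C]_(M, L)) k (V : 'M[C]_(M, k)) :
  herm_pd Kq -> herm_pd Kr -> hadj V *m V = 1%:M -> S^T *m Ct *m V = 0 ->
  \tr (hadj Ct *m Ct *m (V *m hadj V)) * \tr (hadj Cr *m Cr) <=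
  mse Ct Cr Kq Kr S.
Proof.
move=> pq pr VV TV.
have [W [uW hW]] := herm_pd_tens_inv pq pr.
rewrite (mseE Ct Cr _ hW).
set P := V *m hadj V.
have PP : P *m P = P by rewrite /P mulmxA -[V *m _ *m V]mulmxA VV mulmx1.
have hP : hadj P = P by rewrite /P hadjM hadjK.
pose Q := P *t (1%:M : 'M[C]_N).
have <- : \tr (hadj (Ct *t Cr) *m (Ct *t Cr) *m Q) =
          \tr (hadj Ct *m Ct *m P) * \tr (hadj Cr *m Cr).
  by rewrite /Q hadj_tens !tensmx_mul mulmx1 tr_tens.
apply: mse_lower.
- by rewrite /Q hadj_tens hP hadj1.
- by rewrite /Q tensmx_mul PP mulmx1.
- by rewrite /Q -mulmxA tensmx_mul /P mulmxA TV mul0mx tens0mx mulmx0.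
Qed.

Lemma pidE M L : (M <= L)%N ->
  hadj (pid_mx M : 'M[C]_(L, M)) *m (pid_mx M : 'M[C]_(L, M)) = 1%:M.
Proof.
move=> hML; rewrite /hadj map_pid_mx tr_pid_mx pid_mx_id //.
exact: pid_mx_1.
Qed.

Lemma mse_i M N L (Ct : 'M[C]_M) (Cr : 'M[C]_N) (Kq : 'M[C]_L) (Kr : 'M[C]_N) :
  herm_pd Kq -> herm_pd Kr -> Ct \in unitmx -> Cr \in unitmx -> (M <= L)%N ->
  exists2 beta : C, 0 <= beta & forall c : C, 0 < c ->
    mse Ct Cr Kq Kr (c *: (pid_mx M *m invmx Ct)^T) <= (c * c)^-1 * beta.
Proof.
move=> pq pr uCt uCr hML.
have [W [uW hW]] := herm_pd_tens_inv pq pr.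
set E : 'M[C]_(L, M) := pid_mx M.
set Y0 := W *m (E *t Cr).
set G := hadj Y0 *m Y0.
have hG : hadj G = G by rewrite /G hadjM hadjK.
have pdG : pd G.
  move=> x xn0; rewrite /G -[hadj Y0]mulmx1 qf_sand; apply: qf1_gt0.
  apply: contra xn0 => /eqP Yx.
  pose Z := (hadj E *t invmx Cr) *m invmx W.
  have ZY : Z *m Y0 = 1%:M.
    rewrite /Z /Y0 mulmxA -[_ *m invmx W *m W]mulmxA mulVmx // mulmx1.
    by rewrite tensmx_mul pidE // mulVmx // tens11.
  by rewrite -[x]mul1mx -ZY -(mulmxA Z) Yx mulmx0.
have uG : G \in unitmx by apply: pd_unit.
have piG : psd (invmx G) by apply: inv_psd => //; apply: psd_gram.
exists (\tr (hadj (Ct *t Cr) *m (Ct *t Cr) *m invmx G)); first exact: tr_psd.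
move=> c c0.
rewrite (mseE Ct Cr _ hW).
have -> : ((c *: (E *m invmx Ct)^T)^T *m Ct) *t Cr = c *: (E *t Cr).
  by rewrite linearZ /= trmxK -scalemxAl mulmxKV // tensZl.
rewrite -scalemxAr hadjZ -scalemxAl -scalemxAr scalerA (geC0_conj (ltW c0)).
rewrite -/Y0 -/G; apply: mse_upper => //; exact: mulr_gt0.
Qed.

Lemma mse_scalar M N L (Ct : 'M[C]_M) (Cr : 'M[C]_N) (Kr : 'M[C]_N) (q : C)
  (S : 'M[C]_(M, L)) :
  q != 0 -> Kr \in unitmx ->
  mse Ct Cr (q%:M) Kr S = \tr (hadj (Ct *t Cr) *m (Ct *t Cr) *m
     invmx (1%:M + (q^-1 *: (hadj Ct *m (S *m hadj S)^T *m Ct)) *t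
                     (hadj Cr *m invmx Kr *m Cr))).
Proof.
move=> q0 uKr.
have uq : (q%:M : 'M[C]_L) \in unitmx.
  by rewrite unitmxE det_scalar unitrX // unitfE.
have [_ hi] := tens_inv uq uKr.
rewrite /mse hi invmx_scalar hadj_tens !tensmx_mul hadj_tens tensmx_mul.
have e : hadj (S^T *m Ct) *m (q^-1)%:M *m (S^T *m Ct) =
          q^-1 *: (hadj Ct *m (S *m hadj S)^T *m Ct).
  rewrite mul_mx_scalar -scalemxAl; congr (_ *: _).
  by rewrite hadjM hadj_tr trmx_mul !mulmxA.
by rewrite e.
Qed.

End Basics.

Unset Implicit Arguments.
Set Strict Implicit.

Theorem lemma3 (R : rcfType) (M N1 N2 L : nat)
  (Ct : 'M[complex R]_M) (Cr1 : 'M[complex R]_N1) (Cr2 : 'M[complex R]_N2)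
  (Zt : 'M[complex R]_M) (Zr1 : 'M[complex R]_N1) (Zr2 : 'M[complex R]_N2)
  (Kr1 : 'M[complex R]_N1) (Kr2 : 'M[complex R]_N2)
  (hCt : Ct \in unitmx) (hCr1 : Cr1 \in unitmx) (hCr2 : Cr2 \in unitmx)
  (hZt : Zt = Ct *m hadj Ct) (hZr1 : Zr1 = Cr1 *m hadj Cr1)
  (hZr2 : Zr2 = Cr2 *m hadj Cr2)
  (pdZt : herm_pd Zt) (pdZr1 : herm_pd Zr1) (pdZr2 : herm_pd Zr2)
  (pdKr1 : herm_pd Kr1) (pdKr2 : herm_pd Kr2)
  (shK1 : share_eigvecs Kr1 Zr1) (shK2 : share_eigvecs Kr2 Zr2) :
  (* (i) *)
  (forall Kq1 Kq2 : 'M[complex R]_L, herm_pd Kq1 -> herm_pd Kq2 ->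
     (M <= L)%N ->
     forall eps : complex R, 0 < eps ->
     exists S : 'M[complex R]_(M, L),
       total_mse Ct Cr1 Cr2 Kq1 Kq2 Kr1 Kr2 S < eps)
  /\
  (* (ii) *)
  (forall Kq1 Kq2 : 'M[complex R]_L, herm_pd Kq1 -> herm_pd Kq2 ->
     (L < M)%N ->
     forall (st : 'I_M -> complex R) (sr1 : 'I_N1 -> complex R)
            (sr2 : 'I_N2 -> complex R),
     eigvals_of Zt st ->
     (forall i j : 'I_M, (i <= j)%N -> st j <= st i) ->
     eigvals_of Zr1 sr1 -> eigvals_of Zr2 sr2 ->
     forall S : 'M[complex R]_(M, L),
       (\sum_(m < M | (L <= m)%N) st m) *
         (\sum_(n < N1) sr1 n + \sum_(n < N2) sr2 n)
       <= total_mse Ct Cr1 Cr2 Kq1 Kq2 Kr1 Kr2 S)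
  /\
  (* (iii) *)
  (forall q1 q2 tau : complex R, 0 < q1 -> 0 < q2 -> 0 < tau ->
     forall Sopt : 'M[complex R]_(M, L),
       \tr (Sopt *m hadj Sopt) <= tau ->
       (forall S : 'M[complex R]_(M, L), \tr (S *m hadj S) <= tau ->
          total_mse Ct Cr1 Cr2 (q1%:M) (q2%:M) Kr1 Kr2 Sopt
          <= total_mse Ct Cr1 Cr2 (q1%:M) (q2%:M) Kr1 Kr2 S) ->
       exists St : 'M[complex R]_(M, \rank Sopt),
         \tr (St *m hadj St) = \tr (Sopt *m hadj Sopt) /\
         total_mse Ct Cr1 Cr2 (q1%:M) (q2%:M) Kr1 Kr2 St
         = total_mse Ct Cr1 Cr2 (q1%:M) (q2%:M) Kr1 Kr2 Sopt).
Proof.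
split; [|split].
- move=> Kq1 Kq2 p1 p2 hML eps eps0.
  have [b1 b1ge Hb1] := mse_i p1 pdKr1 hCt hCr1 hML.
  have [b2 b2ge Hb2] := mse_i p2 pdKr2 hCt hCr2 hML.
  set b := b1 + b2.
  have bge : 0 <= b by rewrite addr_ge0.
  set c := b / eps + 1.
  have c1 : 1 <= c by rewrite lerDr divr_ge0 // ltW.
  have c0 : 0 < c by apply: lt_le_trans c1; apply: ltr01.
  exists (c *: (pid_mx M *m invmx Ct)^T); rewrite /total_mse.
  apply: (le_lt_trans (lerD (Hb1 c c0) (Hb2 c c0))).
  rewrite -mulrDr -/b mulrC ltr_pdivrMr ?mulr_gt0 //.
  have ec : eps * c = b + eps.
    by rewrite /c mulrDr mulr1 mulrC divfK // gt_eqF.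
  apply: (lt_le_trans (y := eps * c)).
    by rewrite ec ltrDl.
  rewrite mulrA ler_peMr // mulr_ge0 // ltW //.
- move=> Kq1 Kq2 p1 p2 hLM st sr1 sr2 hst hsorted hsr1 hsr2 S.
  have [k [V [VV TV hk]]] := kernel_basis (S^T *m Ct).
  have h1 := @mse_ii _ M N1 L Ct Cr1 Kq1 Kr1 S k V p1 pdKr1 VV TV.
  have h2 := @mse_ii _ M N2 L Ct Cr2 Kq2 Kr2 S k V p2 pdKr2 VV TV.
  set H := hadj Ct *m Ct.
  have hH : hadj H = H by rewrite /H hadjM hadjK.
  have eH : eigvals_of H st.
    rewrite /eigvals_of -hst hZt.
    have -> : H = invmx Ct *m (Ct *m hadj Ct) *m Ct.
      by rewrite /H mulmxA mulVmx // mul1mx.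
    by rewrite char_poly_sim // mulVmx.
  have kf := kyfan hH (psd_gram Ct) eH hsorted VV hLM hk.
  have t1 : \tr (hadj Cr1 *m Cr1) = \sum_(n < N1) sr1 n.
    by rewrite mxtrace_mulC -hZr1 (trace_eig hsr1).
  have t2 : \tr (hadj Cr2 *m Cr2) = \sum_(n < N2) sr2 n.
    by rewrite mxtrace_mulC -hZr2 (trace_eig hsr2).
  have a1 : 0 <= \tr (hadj Cr1 *m Cr1).
    by rewrite -[hadj Cr1 *m Cr1]mulmx1; apply: tr_psd; apply: psd1.
  have a2 : 0 <= \tr (hadj Cr2 *m Cr2).
    by rewrite -[hadj Cr2 *m Cr2]mulmx1; apply: tr_psd; apply: psd1.
  rewrite /total_mse -t1 -t2.
  apply: le_trans (ler_wpM2r (addr_ge0 a1 a2) kf) _.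
  rewrite mulrDr; exact: lerD h1 h2.
- move=> q1 q2 tau q10 q20 tau0 Sopt htau hopt.
  have [St hSt] := reduce_rank Sopt.
  have [B1 [uB1 eK1]] := herm_pd_factor pdKr1.
  have [B2 [uB2 eK2]] := herm_pd_factor pdKr2.
  have uK1 : Kr1 \in unitmx by rewrite eK1 unitmx_mul hadj_unit uB1.
  have uK2 : Kr2 \in unitmx by rewrite eK2 unitmx_mul hadj_unit uB2.
  exists St; split; first by rewrite hSt.
  have q1n : q1 != 0 by rewrite gt_eqF.
  have q2n : q2 != 0 by rewrite gt_eqF.
  rewrite /total_mse (@mse_scalar _ M N1 (\rank Sopt) Ct Cr1 Kr1 q1 St q1n uK1).
  rewrite (@mse_scalar _ M N2 (\rank Sopt) Ct Cr2 Kr2 q2 St q2n uK2).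
  rewrite (@mse_scalar _ M N1 L Ct Cr1 Kr1 q1 Sopt q1n uK1).
  rewrite (@mse_scalar _ M N2 L Ct Cr2 Kr2 q2 Sopt q2n uK2).
  by rewrite hSt.
Qed.
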